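(* Let $f$ be a multiplicative function from the positive integers to the nonnegative integers with $f(p^{k-1})\le f(p^k)$ for all primes $p$ and integers $k\ge1$. A squarefree positive integer is $f$-practical if and only if it is weakly $f$-practical.
   Context: $f$ multiplicative means $f(1)=1$ and $f(ab)=f(a)f(b)$ for coprime $a,b$. $S_f(n)=\sum_{d\mid n} f(d)$. A positive integer $n$ is $f$-practical if every positive integer $m\le S_f(n)$ equals $\sum_{d\in\mathcal{D}}f(d)$ for some set $\mathcal{D}$ of distinct divisors of $n$. Write $n=p_1^{e_1}\cdots p_k^{e_k}$ with distinct primes ordered so that $f(p_1)\le\cdots\le f(p_k)$, and let $m_i=\prod_{j=1}^{i}p_j^{e_j}$ for $0\le i<k$ ($m_0=1$). Then $n$ is weakly $f$-practical if $f(p_{i+1})\le S_f(m_i)+1$ for every $0\le i<k$. *)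

(* Defs.v *)
From mathcomp Require Import all_boot.
Set Implicit Arguments. Unset Strict Implicit. Unset Printing Implicit Defensive.

(* f : positive integers -> nonnegative integers, modelled as nat -> nat
   (the value at 0 is irrelevant). *)
Definition multiplicative (f : nat -> nat) : Prop :=
  f 1 = 1 /\
  forall a b, 0 < a -> 0 < b -> coprime a b -> f (a * b) = f a * f b.

Definition Sf (f : nat -> nat) (n : nat) : nat := \sum_(d <- divisors n) f d.

Definition f_practical (f : nat -> nat) (n : nat) : Prop :=
  forall m, 0 < m -> m <= Sf f n ->
    exists D : seq nat,
      [/\ uniq D, (forall d, d \in D -> d %| n) & m = \sum_(d <- D) f d].

Definition weakly_f_practical (f : nat -> nat) (n : nat) : Prop :=
  exists s : seq nat,
    [/\ perm_eq s (primes n),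
        sorted (fun p q => f p <= f q) s &
        forall i, i < size s ->
          f (nth 0 s i) <= Sf f (\prod_(p <- take i s) p ^ logn p n) + 1].

Definition squarefree (n : nat) : Prop :=
  forall d, 1 < d -> ~~ (d * d %| n).

(* Main.v *)
Require Import Defs.
From mathcomp Require Import all_boot zify.
Set Implicit Arguments. Unset Strict Implicit. Unset Printing Implicit Defensive.

Definition fmon (f : nat -> nat) :=
  forall p k, prime p -> 1 <= k -> f (p ^ k.-1) <= f (p ^ k).

Lemma f_pos f : multiplicative f -> fmon f -> forall e, 0 < e -> 0 < f e.
Proof.
move=> [f1 fM] fm e; elim: e {-2}e (leqnn e) => [|N IH] e le_eN e0.
  by move: le_eN e0; rewrite leqn0 => /eqP ->.
have fpk p k : prime p -> 0 < f (p ^ k).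
  move=> pp; elim: k => [|k IHk]; first by rewrite expn0 f1.
  by apply: leq_trans IHk (fm p k.+1 pp isT).
case: (ltngtP e 1) => [|e1|->]; last by rewrite f1.
  by rewrite ltnS leqn0 => /eqP e0'; rewrite e0' in e0.
have pp := pdiv_prime e1.
have [m cpm em] := pfactor_coprime pp e0.
have lg : 0 < logn (pdiv e) e by rewrite logn_gt0 mem_primes pp e0 pdiv_dvd.
have m0 : 0 < m.
  by move: e0; rewrite {1}em muln_gt0 => /andP[].
have pk : 1 < pdiv e ^ logn (pdiv e) e.
  apply: (leq_trans (prime_gt1 pp)).
  by rewrite -{1}(expn1 (pdiv e)) leq_pexp2l // prime_gt0.
rewrite em fM //; last by rewrite coprime_sym coprimeXl.

rewrite muln_gt0 fpk // andbT IH //.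
have : m < e by rewrite em ltn_Pmulr.
lia.
Qed.

Lemma subsum (T : eqType) (D r : seq T) (F : T -> nat) :
  uniq D -> uniq r -> {subset D <= r} ->
  \sum_(x <- D) F x <= \sum_(x <- r) F x.
Proof.
move=> uD ur sDr; rewrite [X in _ <= X](bigID (mem D)) /=.
rewrite -[X in _ <= X + _]big_filter.
have pD : perm_eq D [seq x <- r | x \in D].
  apply: uniq_perm => //; first exact: filter_uniq.
  by move=> x; rewrite mem_filter; case xD: (x \in D) => //=; rewrite sDr.
by rewrite (perm_big _ pD) /=; apply: leq_addr.
Qed.

Lemma sum_ge (T : eqType) (D : seq T) (F : T -> nat) d :
  d \in D -> F d <= \sum_(x <- D) F x.
Proof.
elim: D => [|x D IH] //; rewrite inE big_cons => /orP[/eqP->|/IH]; first exact: leq_addr.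
by move=> h; apply: leq_trans h (leq_addl _ _).
Qed.

Lemma divisors_mulp m p : 0 < m -> prime p -> coprime p m ->
  perm_eq (divisors (m * p)) (divisors m ++ map (fun d => d * p) (divisors m)).
Proof.
move=> m0 pp cpm; have p0 := prime_gt0 pp.
have mp0 : 0 < m * p by rewrite muln_gt0 m0.
apply: uniq_perm; first exact: divisors_uniq.
  rewrite cat_uniq divisors_uniq /=; apply/andP; split.
    apply/hasPn => x /mapP [d dm ->]; apply/negP; rewrite -dvdn_divisors //.
    move=> h; move: cpm; rewrite prime_coprime // => /negP; apply.
    by apply: dvdn_trans h; apply: dvdn_mull.
  rewrite map_inj_uniq ?divisors_uniq // => x y /eqP.
  by rewrite eqn_pmul2r // => /eqP.
move=> x; rewrite mem_cat -dvdn_divisors // -dvdn_divisors //.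
apply/idP/idP.
  case px: (p %| x) => h.
    apply/orP; right; apply/mapP; exists (x %/ p); last by rewrite divnK.
    by rewrite -dvdn_divisors // -(dvdn_pmul2r p0) divnK.
  apply/orP; left; rewrite -(@Gauss_dvdl x m p) //.
  by rewrite coprime_sym prime_coprime // px.
case/orP => [h|/mapP [d]]; first exact: dvdn_mulr.
by rewrite -dvdn_divisors // => dm ->; rewrite dvdn_pmul2r.
Qed.

Lemma Sf_mulp f m p : multiplicative f -> 0 < m -> prime p -> coprime p m ->
  Sf f (m * p) = Sf f m * (1 + f p).
Proof.
move=> [f1 fM] m0 pp cpm; rewrite /Sf (perm_big _ (divisors_mulp m0 pp cpm)).
rewrite big_cat big_map /= mulnDr muln1 big_distrl /=; congr (_ + _).
apply: eq_big_seq => d; rewrite -dvdn_divisors // => dm.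
have d0 : 0 < d := dvdn_gt0 m0 dm.
by rewrite fM ?(prime_gt0 pp) // coprime_sym (coprime_dvdr dm).
Qed.

Definition Ach f n m := exists D : seq nat,
  [/\ uniq D, (forall d, d \in D -> d %| n) & m = \sum_(d <- D) f d].

Lemma ach_step f m0 p : multiplicative f -> 0 < m0 -> prime p -> coprime p m0 ->
  0 < f p -> f p <= Sf f m0 + 1 ->
  (forall x, x <= Sf f m0 -> Ach f m0 x) ->
  forall x, x <= Sf f (m0 * p) -> Ach f (m0 * p) x.
Proof.
move=> fmul m00 pp cpm fp0 fpS IH x.
rewrite Sf_mulp // => hx.
set S := Sf f m0 in fpS IH hx; set a := f p in fp0 fpS hx.
have p0 := prime_gt0 pp.
pose y := minn S (x %/ a); pose z := x - a * y.
have hy : y <= S by rewrite geq_minl.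
have hz : z <= S.
  rewrite /z /y; case: (leqP S (x %/ a)) => h.
    lia.
  have := divn_eq x a; have := ltn_pmod x fp0. nia.
have exz : x = z + a * y.
  rewrite /z subnK // /y; apply: leq_trans (leq_trunc_div x a).
  by rewrite mulnC leq_mul2r geq_minr orbT.
have [D1 [u1 d1 e1]] := IH z hz.
have [D2 [u2 d2 e2]] := IH y hy.
exists (D1 ++ map (fun d => d * p) D2); split.
- rewrite cat_uniq u1 /=; apply/andP; split.
    apply/hasPn => w /mapP [d dD ->]; apply/negP => h.
    move: cpm; rewrite prime_coprime // => /negP; apply.
    by apply: dvdn_trans (d1 _ h); apply: dvdn_mull.
  rewrite map_inj_uniq // => u v /eqP.
  by rewrite eqn_pmul2r // => /eqP.
- move=> d; rewrite mem_cat => /orP[/d1 h|/mapP [e /d2 h ->]].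
    exact: dvdn_mulr.
  by rewrite dvdn_pmul2r.
- rewrite big_cat big_map /= exz e1 e2; congr (_ + _).
  rewrite mulnC big_distrl /=; apply: eq_big_seq => d dD.
  have d0 : 0 < d := dvdn_gt0 m00 (d2 _ dD).
  case: fmul => _ fM.
  by rewrite fM ?(prime_gt0 pp) // coprime_sym (coprime_dvdr (d2 _ dD)).
Qed.

Lemma prime_in_prod q t : prime q -> all prime t ->
  q %| \prod_(x <- t) x -> q \in t.
Proof.
move=> qp; elim: t => [|x t IH] /=.
  by rewrite big_nil dvdn1 => _ /eqP q1; move: (prime_gt1 qp); rewrite q1.
move=> /andP [xp tp]; rewrite big_cons Euclid_dvdM // inE => /orP[|/(IH tp)->];
  last by rewrite orbT.
by rewrite dvdn_prime2 // => ->.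
Qed.

Lemma coprime_prod p t : prime p -> all prime t -> p \notin t ->
  coprime p (\prod_(x <- t) x).
Proof.
move=> pp; elim: t => [|x t IH] /=; first by rewrite big_nil coprimen1.
move=> /andP [xp tp]; rewrite inE negb_or => /andP [px pt].
by rewrite big_cons coprimeMr IH // andbT prime_coprime // dvdn_prime2.
Qed.

Lemma prod_gt0 t : all prime t -> 0 < \prod_(x <- t) x.
Proof.
elim: t => [|x t IH] /=; first by rewrite big_nil.
by move=> /andP [xp tp]; rewrite big_cons muln_gt0 prime_gt0 // IH.
Qed.

Lemma logn1 n p : 0 < n -> squarefree n -> p \in primes n -> logn p n = 1.
Proof.
move=> n0 sqf pin; have pp : prime p by move: pin; rewrite mem_primes => /and3P[].
have l0 : 0 < logn p n by rewrite logn_gt0.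
have : ~~ (2 <= logn p n).
  by rewrite -pfactor_dvdn // expnS expn1; apply: sqf; apply: prime_gt1.
lia.
Qed.

Lemma prod_s n s : 0 < n -> squarefree n -> perm_eq s (primes n) ->
  \prod_(p <- s) p = n.
Proof.
move=> n0 sqf ps.
rewrite [RHS]prod_prime_decomp // prime_decompE big_map /= -(perm_big _ ps).
by apply: eq_big_seq => p; rewrite (perm_mem ps) => /(logn1 n0 sqf) ->; rewrite expn1.
Qed.

Theorem corollary2p6 (f : nat -> nat) :
  multiplicative f ->
  (forall p k, prime p -> 1 <= k -> f (p ^ k.-1) <= f (p ^ k)) ->
  forall n, 0 < n -> squarefree n ->
    (f_practical f n <-> weakly_f_practical f n).
Proof.
move=> fmul fm n n0 sqf.
have [f1 fM] := fmul.
have fpos := f_pos fmul fm.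
have fp0 p : prime p -> 0 < f p by move=> pp; apply: fpos; apply: prime_gt0.
have gen s : perm_eq s (primes n) -> all prime s /\ uniq s.
  move=> ps; split; last by rewrite (perm_uniq ps) primes_uniq.
  by apply/allP => q; rewrite (perm_mem ps) mem_primes => /and3P[].
have lgs s i : perm_eq s (primes n) ->
    \prod_(p <- take i s) p ^ logn p n = \prod_(p <- take i s) p.
  move=> ps; apply: eq_big_seq => q /mem_take; rewrite (perm_mem ps).
  by move=> /(logn1 n0 sqf) ->; rewrite expn1.
split.
- move=> prac.
  pose s := sort (fun p q => f p <= f q) (primes n).
  have ps : perm_eq s (primes n) by rewrite perm_sort.
  have ss : sorted (fun p q => f p <= f q) s.
    by apply: sort_sorted => p q; apply: leq_total.
  have [allp us] := gen s ps.
  exists s; split => // i ilt.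
  rewrite lgs //.
  set m0 := \prod_(p <- take i s) p.
  set r := \prod_(q <- drop i s) q.
  set p := nth 0 s i.
  have pin : p \in s := mem_nth 0 ilt.
  have pp : prime p := allP allp p pin.
  have ns : n = m0 * r by rewrite /m0 /r -big_cat cat_take_drop (prod_s n0 sqf ps).
  have m00 : 0 < m0 by move: n0; rewrite ns muln_gt0 => /andP[].
  have r0 : 0 < r by move: n0; rewrite ns muln_gt0 => /andP[].
  have dns : drop i s = p :: drop i.+1 s by rewrite /p (drop_nth 0).
  have pnt : p \notin take i s.
    have : uniq (take i s ++ drop i s) by rewrite cat_take_drop.
    rewrite cat_uniq dns => /and3P [_ /hasPn h _].
    by apply: h; rewrite inE eqxx.
  have allt : all prime (take i s) by apply/allP => x /mem_take /(allP allp).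
  have alld : all prime (drop i s) by apply/allP => x /mem_drop /(allP allp).
  have cpm : coprime p m0 := coprime_prod pp allt pnt.
  rewrite leqNgt; apply/negP => hlt.
  set S := Sf f m0 in hlt.
  have S1 : 1 <= S.
    rewrite /S /Sf -f1; apply: sum_ge; exact: divisor1.
  have fp1 := fp0 p pp.
  have hSn : S + 1 <= Sf f n.
    have mpd : m0 * p %| n.
      by rewrite ns /r dns big_cons mulnA dvdn_mulr.
    apply: (@leq_trans (Sf f (m0 * p))).
      rewrite Sf_mulp // -/S; nia.
    apply: subsum; try exact: divisors_uniq.
    move=> x; rewrite -dvdn_divisors ?muln_gt0 ?m00 ?prime_gt0 // => xd.
    by rewrite -dvdn_divisors // (dvdn_trans xd mpd).
  have S0 : 0 < S + 1 by rewrite addn1.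
  have [D [uD dD eD]] := prac (S + 1) S0 hSn.
  case: (boolP (all (fun d => d %| m0) D)) => [/allP hall|].
    have : \sum_(d <- D) f d <= S.
      apply: subsum => //; first exact: divisors_uniq.
      by move=> x /hall; rewrite dvdn_divisors.
    lia.
  rewrite -has_predC => /hasP [d dinD /= ndm].
  have dn := dD d dinD.
  have d0 : 0 < d := dvdn_gt0 n0 dn.
  have g1 : gcdn d r != 1.
    apply/negP => /eqP cdr.
    have cdr' : coprime d r by rewrite /coprime cdr.
    by move: dn; rewrite ns Gauss_dvdl // (negbTE ndm).
  have g0 : 0 < gcdn d r by rewrite gcdn_gt0 d0.
  have g2 : 1 < gcdn d r by lia.
  set q := pdiv (gcdn d r).
  have qp : prime q := pdiv_prime g2.
  have qd : q %| d := dvdn_trans (pdiv_dvd _) (dvdn_gcdl _ _).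
  have qr : q %| r := dvdn_trans (pdiv_dvd _) (dvdn_gcdr _ _).
  have qin : q \in drop i s := prime_in_prod qp alld qr.
  have fpq : f p <= f q.
    move: qin => /(nthP 0) [j jlt <-]; rewrite nth_drop /p.
    move: jlt; rewrite size_drop => jlt.
    have tr : transitive (fun p q => f p <= f q).
      by move=> a b c; apply: leq_trans.
    have rf : reflexive (fun p q => f p <= f q) by move=> a.
    apply: (@sorted_leq_nth nat _ tr rf 0 s ss); rewrite ?inE /=.
    - exact: ilt.
    - by rewrite -ltn_subRL.
    - exact: leq_addr.
  have fqd : f q <= f d.
    have q0 := prime_gt0 qp.
    have dq0 : 0 < d %/ q by rewrite divn_gt0 // dvdn_leq.
    have cq : coprime q (d %/ q).
      rewrite prime_coprime //; apply/negP => h.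
      have : q * q %| n.
        apply: dvdn_trans dn; rewrite -(divnK qd) dvdn_pmul2r //.
      by apply/negP; apply: sqf; apply: prime_gt1.
    rewrite -(divnK qd) mulnC fM // ?coprime_sym // leq_pmulr //.
    exact: fpos.
  have := sum_ge f dinD.
  rewrite -eD => hh.
  have : f p <= S + 1 by apply: leq_trans hh; apply: leq_trans fqd.
  by rewrite leqNgt hlt.
- move=> [s [ps ss hs]] m m0 hm.
  have [allp us] := gen s ps.
  have key : forall i, i <= size s -> forall x,
      x <= Sf f (\prod_(p <- take i s) p) -> Ach f (\prod_(p <- take i s) p) x.
    elim => [|i IH] hi x.
      rewrite take0 big_nil.
      have -> : Sf f 1 = 1 by rewrite /Sf (_ : divisors 1 = [:: 1]) // big_seq1.
      case: x => [_|[_|//]].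
        by exists [::]; split => //; rewrite big_nil.
      exists [:: 1]; split; [by [] | by move=> d; rewrite inE => /eqP -> | by rewrite big_seq1].
    have allt : all prime (take i s) by apply/allP => y /mem_take /(allP allp).
    set p := nth 0 s i.
    have pin : p \in s := mem_nth 0 hi.
    have pp : prime p := allP allp p pin.
    have dns : drop i s = p :: drop i.+1 s by rewrite /p (drop_nth 0).
    have pnt : p \notin take i s.
      have : uniq (take i s ++ drop i s) by rewrite cat_take_drop.
      rewrite cat_uniq dns => /and3P [_ /hasPn h _].
      by apply: h; rewrite inE eqxx.
    rewrite (take_nth 0 hi) big_rcons /= -/p.
    apply: ach_step => //.
    + exact: prod_gt0.
    + exact: coprime_prod.
    + exact: fp0.
    + by have := hs i hi; rewrite lgs.
    + by apply: IH; apply: ltnW.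
  have ee : \prod_(p <- take (size s) s) p = n by rewrite take_size (prod_s n0 sqf ps).
  have := key (size s) (leqnn _) m; rewrite ee => /(_ hm) [D [uD dD eD]].
  by exists D.
Qed.
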